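(* Let $n$ be a positive integer and $N = n^2+n+1$. The equation $a^2+ab+b^2 = N$ has a solution in positive integers $(a,b)$ with $(a,b) \notin \{(n,1),(1,n)\}$ if and only if $N$ is neither a prime nor three times a prime. *)

(* Defs.v *)
From mathcomp Require Import all_boot.

(* Main.v *)
Require Import Defs.
From mathcomp Require Import all_boot.
From Stdlib Require Import ZArith Lia.
From mathcomp Require Import all_boot.
From mathcomp Require Import zify.

Section ZPart.
Local Open Scope Z_scope.


Lemma unit_factor k e : k * e = -1 -> k * k = 1.
Proof. intros H. assert (k * (-e) = 1) by lia. apply Z.eq_mul_1 in H0. lia. Qed.

Lemma cancel_Z x y s t : 0 < s*s - s*t + t*t -> x*s - y*t = 0 -> x*t + y*s - y*t = 0 -> x = 0 /\ y = 0.
Proof.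
  intros Hn H1 H2.
  assert (E1 : x * (s*s - s*t + t*t) = (x*s - y*t)*(s-t) + (x*t + y*s - y*t)*t) by ring.
  assert (E2 : y * (s*s - s*t + t*t) = -(x*s - y*t)*t + (x*t + y*s - y*t)*s) by ring.
  rewrite H1 H2 in E1 E2. nia.
Qed.

Lemma selfconj n p q s t u1 u2 :
  p*s - q*t = n -> p*t + q*s - q*t = -1 -> u1*u1 - u1*u2 + u2*u2 = 1 ->
  p - q = u1*p - u2*q -> -q = u1*q + u2*p - u2*q ->
  p*p - p*q + q*q = 1 \/ p*p - p*q + q*q = 3.
Proof.
  intros H1 H2 Hu E1 E2.
  assert (-1 <= u1 <= 1 /\ -1 <= u2 <= 1) as [B1 B2] by nia.
  assert (u1 = -1 \/ u1 = 0 \/ u1 = 1) as C1 by lia.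
  assert (u2 = -1 \/ u2 = 0 \/ u2 = 1) as C2 by lia.
  destruct C1 as [C1|[C1|C1]]; destruct C2 as [C2|[C2|C2]]; subst u1 u2; try lia.
  - assert (p = q) by lia; subst. assert (q * s = -1) by lia.
    apply unit_factor in H. lia.
  - assert (q = 2*p) by lia; subst.
    assert (p * (2*s - t) = -1) by lia. apply unit_factor in H. lia.
  - assert (p = 2*q) by lia; subst.
    assert (q * (t+s) = -1) by lia. apply unit_factor in H. lia.
  - assert (p = 0) by lia; subst.
    assert (q * (s-t) = -1) by lia. apply unit_factor in H. lia.
  - assert (q = 0) by lia; subst.
    assert (p * t = -1) by lia. apply unit_factor in H. lia.
  - assert (p = -q) by lia; subst.
    assert (q * (s - 2*t) = -1) by lia. apply unit_factor in H. lia.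
Qed.

Lemma core (k : nat) : forall d r : Z, (Z.to_nat d < k)%nat -> 0 < d -> (d | r*r + r + 1) ->
  exists p q s t, p*p - p*q + q*q = d /\ p*s - q*t = r /\ p*t + q*s - q*t = -1.
Proof.
  induction k as [|k IH]; intros d r Hk Hd Hdiv; [lia|].
  destruct (Z.eq_dec d 1) as [->|Hd1].
  { exists 1, 0, r, (-1). lia. }
  destruct Hdiv as [c Hc].
  pose (r0 := r mod d). pose (kk := r / d).
  assert (Hr : r = d * kk + r0) by (apply Z.div_mod; lia).
  assert (Hr0 : 0 <= r0 < d) by (apply Z.mod_pos_bound; lia).
  clearbody r0 kk.
  pose (e := c - d*kk*kk - 2*kk*r0 - kk).
  assert (He : r0*r0 + r0 + 1 = d * e) by (unfold e; subst r; nia).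
  clearbody e.
  assert (He0 : 0 < e) by nia.
  assert (He1 : e < d) by nia.
  destruct (IH e r0) as (p' & q' & s' & t' & N1 & P1 & P2); [lia|lia|exists d; lia|].
  assert (Nm : (p'*p' - p'*q' + q'*q') * (s'*s' - s'*t' + t'*t') =
     (p'*s' - q'*t')*(p'*s' - q'*t') - (p'*s' - q'*t')*(p'*t' + q'*s' - q'*t') + (p'*t' + q'*s' - q'*t')*(p'*t' + q'*s' - q'*t')) by ring.
  rewrite P1 P2 N1 in Nm.
  assert (Nb : s'*s' - s'*t' + t'*t' = d) by nia.
  exists s', t', (p' + kk*(s' - t')), (q' - kk*t').
  split; [exact Nb|]. split.
  - assert (E : s' * (p' + kk * (s' - t')) - t' * (q' - kk * t') = (p'*s' - q'*t') + kk*(s'*s' - s'*t' + t'*t')) by ring.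
    rewrite E P1 Nb. lia.
  - assert (E : s' * (q' - kk * t') + t' * (p' + kk * (s' - t')) - t' * (q' - kk * t') = p'*t' + q'*s' - q'*t') by ring.
    rewrite E; exact P2.
Qed.


Lemma nonsq n z : 0 < n -> z*z <> n*n + n + 1.
Proof.
  intros Hn H. assert (E : z*z = Z.abs z * Z.abs z) by (destruct (Z.abs_spec z) as [[_ ->]|[_ ->]]; ring).
  rewrite E in H. assert (0 <= Z.abs z) by lia.
  destruct (Z.le_gt_cases (Z.abs z) n); nia.
Qed.

Lemma conv x y : x <> 0 -> y <> 0 -> x <> y -> exists a b u1 u2, 0<a /\ 0<b /\
  a*a+a*b+b*b = x*x - x*y + y*y /\ u1*u1 - u1*u2 + u2*u2 = 1 /\
  x = u1*a - u2*(-b) /\ y = u1*(-b) + u2*a - u2*(-b).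
Proof.
  intros Hx Hy Hxy.
  assert (Hc: (x<0/\y<0/\x<y) \/ (x<0/\y<0/\y<x) \/ (x<0/\0<y) \/ (0<x/\y<0) \/ (0<x/\0<y/\x<y) \/ (0<x/\0<y/\y<x)) by lia.
  destruct Hc as [H|[H|[H|[H|[H|H]]]]].
  - exists (-y), (y - x), (-1), (-1). repeat split; try ring; lia.
  - exists (x - y), (-x), 0, (-1). repeat split; try ring; lia.
  - exists (-x), y, (-1), 0. repeat split; try ring; lia.
  - exists x, (-y), 1, 0. repeat split; try ring; lia.
  - exists (y - x), x, 0, 1. repeat split; try ring; lia.
  - exists y, (x - y), 1, 1. repeat split; try ring; lia.
Qed.

Lemma unit_cases u1 u2 : u1*u1 - u1*u2 + u2*u2 = 1 ->
  (u1 = 1 /\ u2 = 0) \/ (u1 = -1 /\ u2 = 0) \/ (u1 = 0 /\ u2 = 1) \/ (u1 = 0 /\ u2 = -1)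
  \/ (u1 = 1 /\ u2 = 1) \/ (u1 = -1 /\ u2 = -1).
Proof.
  intros Hu.
  assert (-1 <= u1 <= 1 /\ -1 <= u2 <= 1) as [B1 B2] by nia.
  assert (u1 = -1 \/ u1 = 0 \/ u1 = 1) as C1 by lia.
  assert (u2 = -1 \/ u2 = 0 \/ u2 = 1) as C2 by lia.
  destruct C1 as [C1|[C1|C1]]; destruct C2 as [C2|[C2|C2]]; subst u1 u2; lia.
Qed.

Lemma backward n d m : 0 < n -> 1 < d -> 1 < m -> d <> 3 -> m <> 3 -> d*m = n*n+n+1 ->
  exists a b, 0<a /\ 0<b /\ a*a+a*b+b*b = n*n+n+1 /\ ~(a = n /\ b = 1) /\ ~(a = 1 /\ b = n).
Proof.
  intros Hn Hd Hm Hd3 Hm3 Hdm.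
  destruct (core (S (Z.to_nat d)) d n) as (p & q & s & t & Na & A1 & A2); [lia|lia|exists m; lia|].
  assert (Nm : (p*p - p*q + q*q) * (s*s - s*t + t*t) =
     (p*s - q*t)*(p*s - q*t) - (p*s - q*t)*(p*t + q*s - q*t) + (p*t + q*s - q*t)*(p*t + q*s - q*t)) by ring.
  rewrite A1 A2 Na in Nm.
  assert (Nb : s*s - s*t + t*t = m).
  { assert (Z0 : d * (s*s - s*t + t*t - m) = 0) by lia.
    apply Z.mul_eq_0 in Z0. lia. }
  set (x := p*s - q*s + q*t). set (y := p*t - q*s).
  assert (Ng : x*x - x*y + y*y = (p*p - p*q + q*q) * (s*s - s*t + t*t)) by (unfold x, y; ring).
  rewrite Na Nb Hdm in Ng.
  assert (x <> 0). { intro E. rewrite E in Ng. apply (nonsq n y); lia. }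
  assert (y <> 0). { intro E. rewrite E in Ng. apply (nonsq n x); lia. }
  assert (x <> y). { intro E. rewrite E in Ng. apply (nonsq n y); lia. }
  destruct (conv x y) as (a & b & u1 & u2 & Ha & Hb & Nab & Hu & X & Y); try assumption.
  exists a, b. repeat split; try lia.
  - intros [-> ->].
    (* delta = conj alpha - u alpha *)
    set (d1 := (p - q) - (u1*p - u2*q)). set (d2 := -q - (u1*q + u2*p - u2*q)).
    assert (E1 : d1*s - d2*t = x - (u1*(p*s - q*t) - u2*(p*t + q*s - q*t))) by (unfold d1, d2, x; ring).
    assert (E2 : d1*t + d2*s - d2*t = y - (u1*(p*t + q*s - q*t) + u2*(p*s - q*t) - u2*(p*t + q*s - q*t))) by (unfold d1, d2, y; ring).
    rewrite A1 A2 in E1 E2.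
    destruct (cancel_Z d1 d2 s t) as [D1 D2]; [lia|lia|lia|].
    unfold d1, d2 in D1, D2.
    destruct (selfconj n p q s t u1 u2 A1 A2 Hu) as [F|F]; lia.
  - intros [-> ->].
    set (e1 := s - (u2*(s-t) - (u2-u1)*(-t))).
    set (e2 := t - (u2*(-t) + (u2-u1)*(s-t) - (u2-u1)*(-t))).
    assert (E1 : e1*(p-q) - e2*(-q) = x - (u2*((p*s - q*t) - (p*t + q*s - q*t)) - (u2-u1)*(-(p*t + q*s - q*t)))) by (unfold e1, e2, x; ring).
    assert (E2 : e1*(-q) + e2*(p-q) - e2*(-q) = y - (u2*(-(p*t + q*s - q*t)) + (u2-u1)*((p*s - q*t) - (p*t + q*s - q*t)) - (u2-u1)*(-(p*t + q*s - q*t)))) by (unfold e1, e2, y; ring).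
    rewrite A1 A2 in E1 E2.
    assert (Npq : (p-q)*(p-q) - (p-q)*(-q) + (-q)*(-q) = p*p - p*q + q*q) by ring.
    destruct (cancel_Z e1 e2 (p-q) (-q)) as [D1 D2]; [lia|lia|lia|].
    unfold e1, e2 in D1, D2.
    assert (B1 : s*p - t*q = n) by lia.
    assert (B2 : s*q + t*p - t*q = -1) by lia.
    clear E1 E2 Npq Nab Ng X Y H H0 H1 Nm e1 e2 x y.
    destruct (unit_cases u1 u2 Hu) as [[-> ->]|[[-> ->]|[[-> ->]|[[-> ->]|[[-> ->]|[-> ->]]]]]].
    + destruct (selfconj n s t p q 1 1 B1 B2) as [F|F]; lia.
    + destruct (selfconj n s t p q (-1) (-1) B1 B2) as [F|F]; lia.
    + destruct (selfconj n s t p q 0 (-1) B1 B2) as [F|F]; lia.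
    + destruct (selfconj n s t p q 0 1 B1 B2) as [F|F]; lia.
    + destruct (selfconj n s t p q 1 0 B1 B2) as [F|F]; lia.
    + destruct (selfconj n s t p q (-1) 0 B1 B2) as [F|F]; lia.
Qed.
End ZPart.


Lemma fwd_core n a b : 0 < n -> 0 < a -> 0 < b -> a^2 + a*b + b^2 = n^2+n+1 ->
  ~ ((a, b) = (n, 1) \/ (a, b) = (1, n)) ->
  ~ (n^2+n+1 %| b*n - a) /\ ~ (n^2+n+1 %| a + b + b*n).
Proof.
  move=> hn ha hb hN hne.
  have an : a <= n by nia.
  have bn : b <= n by nia.
  split.
  - move=> hd. have [c0|cpos] := posnP (b*n - a).
    + apply: hne; left. have b1 : b = 1 by nia. subst b. congr pair; lia.
    + have := dvdn_leq cpos hd. nia.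
  - case/dvdnP=> k hk.
    have k1 : k = 1.
    { have [k0|kpos] := posnP k; first by subst k; lia.
      case: (ltnP 1 k) => hk2; last by lia. nia. }
    subst k. apply: hne; right.
    have b1 : b = n by nia. subst b. congr pair; lia.
Qed.

Lemma three_dvd n : 3 %| n^2+n+1 -> 3 %| (2*n+1).
Proof.
  case/dvdnP=> k hk.
  have h : (2*n+1)*(2*n+1) = 3 * (4*k - 1) by nia.
  have : 3 %| (2*n+1)*(2*n+1) by rewrite h dvdn_mulr.
  by rewrite Euclid_dvdM // orbb.
Qed.

Lemma not9 n : ~ (9 %| n^2+n+1).
Proof.
  move=> h9.
  have h3 : 3 %| n^2+n+1 by apply: dvdn_trans h9; rewrite (_ : 9 = 3 * 3) // dvdn_mulr.
  have := three_dvd n h3. case/dvdnP=> j hj. case/dvdnP: h9 => k hk. lia.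
Qed.

Lemma hsum_lem a b n : a <= b*n -> (b*n - a) + (a + b + b*n) = b*(2*n+1).
Proof. move=> h. nia. Qed.

Lemma forward n : 0 < n -> (exists a b : nat,
      [/\ 0 < a, 0 < b, a ^ 2 + a * b + b ^ 2 = n^2+n+1 &
          ~ ((a, b) = (n, 1) \/ (a, b) = (1, n))]) ->
   (~ prime (n^2+n+1) /\ ~ (exists p, prime p /\ n^2+n+1 = 3 * p)).
Proof.
  move=> hn [a [b [ha hb hN hne]]].
  have [nc nY] := fwd_core n a b hn ha hb hN hne.
  have an : a <= n by nia.
  have key : (b*n - a) * (a + b + b * n) + (n^2+n+1) = b^2 * (n^2+n+1) by nia.
  have hdiv : forall q, q %| n^2+n+1 -> q %| (b*n - a) * (a + b + b * n).
  { move=> q hq. have : q %| b^2 * (n^2+n+1) by rewrite dvdn_mull.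
    by rewrite -key (dvdn_addl _ hq). }
  split.
  - move=> pN. have := hdiv _ (dvdnn _). rewrite Euclid_dvdM //. case/orP; by [].
  - case=> p [pp hp].
    have p3 : p != 3.
    { apply/eqP=> e. subst p. apply: (@not9 n). by rewrite hp. }
    have h3 : 3 %| n^2+n+1 by rewrite hp dvdn_mulr.
    have h21 := three_dvd n h3.
    have hsum : (b*n - a) + (a + b + b*n) = b * (2*n+1).
    { apply: hsum_lem. apply: (leq_trans an). by rewrite leq_pmull. }
    have hsd : 3 %| (b*n - a) + (a + b + b*n) by rewrite hsum dvdn_mull.
    have hc3 : (3 %| b*n - a) && (3 %| a + b + b*n).
    { have := hdiv _ h3. rewrite Euclid_dvdM //. case/orP=> h.
      - by rewrite h -(dvdn_addr _ h).
      - by rewrite h andbT -(dvdn_addl _ h). }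
    case/andP: hc3 => hc hy.
    have cop : coprime 3 p.
    { rewrite prime_coprime //. by rewrite dvdn_prime2 // eq_sym. }
    have hpd : p %| n^2+n+1 by rewrite hp dvdn_mull.
    have := hdiv _ hpd. rewrite Euclid_dvdM //. case/orP=> h.
    + apply: nc. by rewrite hp Gauss_dvd // hc h.
    + apply: nY. by rewrite hp Gauss_dvd // hy h.
Qed.


Lemma fix3 n m : 3 * m = n^2+n+1 -> 1 < m -> ~ (exists p, prime p /\ n^2+n+1 = 3 * p) ->
  exists d m', [/\ d * m' = n^2+n+1, 1 < d, 1 < m', d <> 3 & m' <> 3].
Proof.
  move=> hm m1 hnp.
  have : ~~ prime m.
  { apply/negP=> pm. apply: hnp. exists m. split; [exact: pm | by rewrite hm]. }
  case/primePn; first by move=> h; lia.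
  move=> [d1 /andP [d1a d1b] d1m].
  have e := divnK d1m.
  set d2 := m %/ d1 in e.
  have d2g : 1 < d2 by nia.
  exists (3 * d1), d2; split => //; try lia.
  - move=> d23. apply: (not9 n). rewrite -hm -e d23.
    by rewrite (_ : 3 * (3 * d1) = 9 * d1) ?dvdn_mulr // mulnA.
Qed.

Lemma split_ok n : 0 < n -> ~ prime (n^2+n+1) -> ~ (exists p, prime p /\ n^2+n+1 = 3 * p) ->
  exists d m, [/\ d * m = n^2+n+1, 1 < d, 1 < m, d <> 3 & m <> 3].
Proof.
  move=> hn npr hnp.
  have : ~~ prime (n^2+n+1) by apply/negP.
  case/primePn; first by move=> h; nia.
  move=> [d /andP [d1 dN] dd].
  have e := divnK dd. set m := (n^2+n+1) %/ d in e.
  have m1 : 1 < m by nia.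
  case: (eqVneq d 3) => [d3|d3].
  - apply: (fix3 n m) => //. by rewrite -e d3 mulnC.
  case: (eqVneq m 3) => [m3|m3].
  - apply: (fix3 n d) => //. by rewrite -e m3.
  exists d, m. split => //; [by rewrite mulnC | by apply/eqP | by apply/eqP].
Qed.

Lemma natZ (A B n : nat) : (Z.of_nat A * Z.of_nat A + Z.of_nat A * Z.of_nat B + Z.of_nat B * Z.of_nat B = Z.of_nat n * Z.of_nat n + Z.of_nat n + 1)%Z -> A^2 + A*B + B^2 = n^2+n+1.
Proof. move=> h. nia. Qed.

Theorem theorem4 (n : nat) (hn : 0 < n) :
  let N := n ^ 2 + n + 1 in
  (exists a b : nat,
      [/\ 0 < a, 0 < b, a ^ 2 + a * b + b ^ 2 = N &
          ~ ((a, b) = (n, 1) \/ (a, b) = (1, n))])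
  <-> (~ prime N /\ ~ (exists p, prime p /\ N = 3 * p)).
Proof.
  move=> N. rewrite /N. split.
  - exact: forward n hn.
  - case=> npr hnp.
    have [d [m [hdm d1 m1 d3 m3]]] := split_ok n hn npr hnp.
    have hZ : (Z.of_nat d * Z.of_nat m = Z.of_nat n * Z.of_nat n + Z.of_nat n + 1)%Z by nia.
    have [a [b [ha [hb [hab [hne1 hne2]]]]]] :=
      backward (Z.of_nat n) (Z.of_nat d) (Z.of_nat m) ltac:(lia) ltac:(lia) ltac:(lia) ltac:(lia) ltac:(lia) hZ.
    exists (Z.to_nat a), (Z.to_nat b). split; try lia.
    + case=> [[e1 e2]|[e1 e2]].
      * apply: hne1. lia.
      * apply: hne2. lia.
Qed.
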